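(* Let $R$ be a schematic semi-graded ring and $J$ a compatible semi-graded ideal of $R$. Let $\mathcal{C}\text{-}R$ (resp. $\mathcal{C}\text{-}R/J$) be the full subcategory of $\mathsf{LSG}\text{-}R$ (resp. $\mathsf{LSG}\text{-}R/J$) consisting of the $T$-closed modules. Let $i_*:\mathcal{C}\text{-}R/J\to\mathcal{C}\text{-}R$ be the restriction of $Q f_*$ and $i^!:\mathcal{C}\text{-}R\to\mathcal{C}\text{-}R/J$ the restriction of $f^!$. Then $i_*$ is left adjoint to $i^!$, and $i_*$ is fully faithful.
   Context: Rings are associative with $1$; modules are left modules. A ring $R$ is semi-graded (SG) if there are additive subgroups $R_n$ ($n\in\mathbb{Z}$) with $R=\bigoplus_n R_n$, $R_mR_n\subseteq\bigoplus_{k\le m+n}R_k$, and $1\in R_0$; positively SG if $R_n=0$ for $n<0$. An $R$-module $M$ is SG if $M=\bigoplus_nM_n$ with $R_mM_n\subseteq\bigoplus_{k\le m+n}M_k$ for $m\ge0$; homomorphisms are homogeneous if they preserve degrees; SG submodules are submodules $N$ with $N=\bigoplus(N\cap M_n)$. An SG ideal $J$ is a two-sided ideal that is an SG submodule of $R$; $R/J$ is SG with $(R/J)_n=(R_n+J)/J$, $f:R\to R/J$ canonical. Let $R'_n=\{r\in R_n: rh\in R_{n+m}\ \forall m,\forall h\in R_m\}$, $R''_n=\{r\in R'_n: hr\in R_{n+m}\ \forall m,\forall h\in R_m\}$, $R'=\bigcup R'_n$, $R''=\bigcup R''_n$ (similarly for $R/J$). $M$ is LSG if $R'_nM_m\subseteq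 M_{n+m}$; $\mathsf{LSG}\text{-}R$ is the category of LSG modules and homogeneous homomorphisms. $J$ is compatible if the image of $R'$ in $R/J$ is $(R/J)'$. A left Ore set $S$ is good if $S\subseteq R''$ and for $s\in S,r\in R'$ there are $u\in R'$, $v\in S$ with $us=vr$. $R_{\ge t}$ is the intersection of all SG ideals containing $\bigoplus_{k\ge t}R_k$. $m\in M$ is torsion if $(R_{\ge t})^nm=0$ for some $n,t\ge0$; $T(M)$ is the torsion submodule. $R$ is schematic if it is positively SG, left Noetherian, and there is a finite set $I$ of good left Ore sets $S$ with $S\cap\bigoplus_{k\ge1}R_k\ne\emptyset$ such that for each $(x_S)\in\prod_{S\in I}S$ there are $t,m$ with $(R_{\ge t})^m\subseteq\sum_SRx_S$. An LSG module $E$ is $T$-closed if for every LSG $M$, SG submodule $N$ with $M/N$ torsion, every homogeneous $N\to E$ extends uniquely to a homogeneous $M\to E$. For an LSG $R$-module $M$, $Q(M)$ is its module of quotients (the $T$-closed module containing $M/T(M)$ with torsion quotient), an LSG module where $\xi$ is homogeneous of degree $k$ iff for some $n,t$, $(R_{\ge n})^t\xi\subseteq M/T(M)$ and $s\xi$ has degree $k+\deg s$ for all homogeneous $s\in(R_{\ge n})^t\cap R'$. $f_*$ is restriction of scalars along $f$; $f^!(N)$ is the largest SG submodule of $N$ annihilated by $J$, an $R/J$-module via $\overline rm=rm$, on morphisms given by restriction. *)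

(* Defs.v *)
From HB Require Import structures.
From mathcomp Require Import all_boot all_order all_algebra.
From Stdlib Require Import ClassicalEpsilon.

Set Implicit Arguments.
Unset Strict Implicit.
Unset Printing Implicit Defensive.

Import Order.TTheory GRing.Theory Num.Theory.
Local Open Scope ring_scope.

Definition dsum_in (V : zmodType) (P : int -> V -> Prop) (K : int -> Prop)
  (x : V) : Prop :=
  exists (s : seq int) (c : int -> V),
    uniq s /\ (forall k, k \in s -> K k) /\ (forall k, P k (c k)) /\
    x = \sum_(k <- s) c k.

Definition graded_dirsum (V : zmodType) (D : V -> Prop) (P : int -> V -> Prop)
  : Prop :=
  (forall n, P n 0 /\ forall x y, P n x -> P n y -> P n (x - y)) /\
  (forall n x, P n x -> D x) /\
  (forall x, D x -> dsum_in P (fun _ => True) x) /\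
  (forall (s : seq int) (c : int -> V), uniq s -> (forall k, P k (c k)) ->
     \sum_(k <- s) c k = 0 -> forall k, k \in s -> c k = 0).

Definition SG_sub (V : zmodType) (P : int -> V -> Prop) (N : V -> Prop) : Prop :=
  forall x, N x -> exists (s : seq int) (c : int -> V),
    uniq s /\ (forall k, P k (c k) /\ N (c k)) /\ x = \sum_(k <- s) c k.

Definition SG_ring (A : nzRingType) (G : int -> A -> Prop) : Prop :=
  graded_dirsum (fun _ => True) G /\
  (forall m n x y, G m x -> G n y -> dsum_in G (fun k => k <= m + n) (x * y)) /\
  G 0 1.

Definition pos_SG_ring (A : nzRingType) (G : int -> A -> Prop) : Prop :=
  SG_ring G /\ (forall n x, n < 0 -> G n x -> x = 0).

Definition left_ideal (A : nzRingType) (I : A -> Prop) : Prop :=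
  I 0 /\ (forall x y, I x -> I y -> I (x - y)) /\ (forall r x, I x -> I (r * x)).

Definition two_sided_ideal (A : nzRingType) (I : A -> Prop) : Prop :=
  left_ideal I /\ (forall r x, I x -> I (x * r)).

Definition SG_ideal (A : nzRingType) (G : int -> A -> Prop) (I : A -> Prop)
  : Prop := two_sided_ideal I /\ SG_sub G I.

Definition R_geq (A : nzRingType) (G : int -> A -> Prop) (t : nat) (x : A)
  : Prop :=
  forall I, SG_ideal G I ->
    (forall y, dsum_in G (fun k => t%:Z <= k) y -> I y) -> I x.

Definition ipow (A : nzRingType) (I : A -> Prop) (n : nat) (x : A) : Prop :=
  match n with
  | 0%N => True
  | _ => exists ss : seq (seq A),
           (forall s, s \in ss -> size s = n /\ forall a, a \in s -> I a) /\
           x = \sum_(s <- ss) \prod_(a <- s) a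
  end.

Definition Rp (A : nzRingType) (G : int -> A -> Prop) (n : int) (r : A) : Prop :=
  G n r /\ forall m h, G m h -> G (n + m) (r * h).
Definition Rpp (A : nzRingType) (G : int -> A -> Prop) (n : int) (r : A) : Prop :=
  Rp G n r /\ forall m h, G m h -> G (n + m) (h * r).
Definition inRp (A : nzRingType) (G : int -> A -> Prop) (r : A) : Prop :=
  exists n, Rp G n r.
Definition inRpp (A : nzRingType) (G : int -> A -> Prop) (r : A) : Prop :=
  exists n, Rpp G n r.

Definition left_noetherian (A : nzRingType) : Prop :=
  forall I : nat -> A -> Prop, (forall n, left_ideal (I n)) ->
    (forall n x, I n x -> I n.+1 x) ->
    exists N, forall n x, (N <= n)%N -> I n x -> I N x.

Definition left_Ore (A : nzRingType) (S : A -> Prop) : Prop :=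
  S 1 /\ (forall a b, S a -> S b -> S (a * b)) /\
  (forall s r, S s -> exists u v, S v /\ u * s = v * r).

Definition good_Ore (A : nzRingType) (G : int -> A -> Prop) (S : A -> Prop)
  : Prop :=
  left_Ore S /\ (forall s, S s -> inRpp G s) /\
  (forall s r, S s -> inRp G r -> exists u v, inRp G u /\ S v /\ u * s = v * r).

Definition schematic (A : nzRingType) (G : int -> A -> Prop) : Prop :=
  pos_SG_ring G /\ left_noetherian A /\
  exists Is : seq (A -> Prop),
    (forall i, (i < size Is)%N ->
       good_Ore G (nth (fun _ => False) Is i) /\
       exists s, nth (fun _ => False) Is i s /\ dsum_in G (fun k => 1 <= k) s) /\
    (forall xs : seq A, size xs = size Is ->
       (forall i, (i < size Is)%N -> nth (fun _ => False) Is i (nth 0 xs i)) ->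
       exists (t m : nat), forall a, ipow (R_geq G t) m a ->
         exists rs : seq A, size rs = size xs /\
           a = \sum_(i < size xs) nth 0 rs i * nth 0 xs i).

(* grading of the quotient ring S = R/J (f : R -> S canonical surjection) *)
Definition img_grading (A B : nzRingType) (f : A -> B) (G : int -> A -> Prop)
  (n : int) (s : B) : Prop := exists r, G n r /\ f r = s.

Definition compatible (A B : nzRingType) (G : int -> A -> Prop) (f : A -> B)
  : Prop :=
  forall s, (exists r, inRp G r /\ f r = s) <-> inRp (img_grading f G) s.

(* Modules: a carrier zmodType with a distinguished subset (the module      *)
(* itself), an action and a grading.                                        *)

Unset Implicit Arguments.

Record modT (A : nzRingType) := ModT {
  mcar : zmodType;
  mdom : mcar -> Prop;
  mact : A -> mcar -> mcar;
  mdeg : int -> mcar -> Prop }.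
Arguments mcar {A} m.
Arguments mdom {A} m _.
Arguments mact {A} m _ _.
Arguments mdeg {A} m _ _.

Definition is_module {A : nzRingType} (M : modT A) : Prop :=
  mdom M 0 /\ (forall x y, mdom M x -> mdom M y -> mdom M (x - y)) /\
  (forall r x, mdom M x -> mdom M (mact M r x)) /\
  (forall r x y, mdom M x -> mdom M y ->
     mact M r (x + y) = mact M r x + mact M r y) /\
  (forall r s x, mdom M x -> mact M (r + s) x = mact M r x + mact M s x) /\
  (forall r s x, mdom M x -> mact M (r * s) x = mact M r (mact M s x)) /\
  (forall x, mdom M x -> mact M 1 x = x).

Definition SG_mod {A : nzRingType} (G : int -> A -> Prop) (M : modT A) : Prop :=
  is_module M /\ graded_dirsum (mdom M) (mdeg M) /\
  (forall m n r x, 0 <= m -> G m r -> mdeg M n x ->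
     dsum_in (mdeg M) (fun k => k <= m + n) (mact M r x)).

Definition LSG_mod {A : nzRingType} (G : int -> A -> Prop) (M : modT A) : Prop :=
  SG_mod G M /\
  (forall n m r x, Rp G n r -> mdeg M m x -> mdeg M (n + m) (mact M r x)).

Definition submod {A : nzRingType} (M : modT A) (N : mcar M -> Prop) : Prop :=
  (forall x, N x -> mdom M x) /\ N 0 /\
  (forall x y, N x -> N y -> N (x - y)) /\ (forall r x, N x -> N (mact M r x)).

Definition SG_submod {A : nzRingType} (M : modT A) (N : mcar M -> Prop) : Prop :=
  submod M N /\ SG_sub (mdeg M) N.

Definition hom_on {A : nzRingType} (M N : modT A) (D : mcar M -> Prop)
  (phi : mcar M -> mcar N) : Prop :=
  (forall x, D x -> mdom N (phi x)) /\
  (forall x y, D x -> D y -> phi (x + y) = phi x + phi y) /\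
  (forall r x, D x -> phi (mact M r x) = mact N r (phi x)) /\
  (forall n x, D x -> mdeg M n x -> mdeg N n (phi x)).

Definition ghom {A : nzRingType} (M N : modT A) (phi : mcar M -> mcar N) : Prop :=
  hom_on M N (mdom M) phi.

Definition torsion {A : nzRingType} (G : int -> A -> Prop) (M : modT A)
  (x : mcar M) : Prop :=
  mdom M x /\ exists (n t : nat), forall a, ipow (R_geq G t) n a -> mact M a x = 0.

Definition quot_torsion {A : nzRingType} (G : int -> A -> Prop) (M : modT A)
  (N : mcar M -> Prop) : Prop :=
  forall x, mdom M x -> exists (n t : nat),
    forall a, ipow (R_geq G t) n a -> N (mact M a x).

Definition T_closed {A : nzRingType} (G : int -> A -> Prop) (E : modT A) : Prop :=
  LSG_mod G E /\
  forall (M : modT A) (N : mcar M -> Prop), LSG_mod G M -> SG_submod M N ->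
    quot_torsion G M N ->
    forall phi : mcar M -> mcar E, hom_on M E N phi ->
      (exists psi, ghom M E psi /\ forall x, N x -> psi x = phi x) /\
      (forall psi1 psi2, ghom M E psi1 -> ghom M E psi2 ->
         (forall x, N x -> psi1 x = phi x) -> (forall x, N x -> psi2 x = phi x) ->
         forall x, mdom M x -> psi1 x = psi2 x).

(* (E, j) is a module of quotients of M : E is T-closed, j : M -> E is       *)
(* homogeneous with kernel T(M) (so E contains M/T(M)) and E/j(M) torsion.  *)
Definition is_Q {A : nzRingType} (G : int -> A -> Prop) (M E : modT A)
  (j : mcar M -> mcar E) : Prop :=
  T_closed G E /\ ghom M E j /\
  (forall x, mdom M x -> (j x = 0 <-> torsion G M x)) /\
  quot_torsion G E (fun e => exists m, mdom M m /\ j m = e).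

Definition fstar {A B : nzRingType} (f : A -> B) (N : modT B) : modT A :=
  @ModT A (mcar N) (mdom N) (fun r x => mact N (f r) x) (mdeg N).

Definition fsh_set {A : nzRingType} (J : A -> Prop) (M : modT A) (x : mcar M)
  : Prop :=
  exists P : mcar M -> Prop, SG_submod M P /\
    (forall r y, J r -> P y -> mact M r y = 0) /\ P x.

(* a preimage under f (S-action on f^!(M) is  (f r) . m := r m) *)
Definition sect {A B : nzRingType} (f : A -> B) (s : B) : A :=
  epsilon (inhabits 0) (fun r => f r = s).

Definition fshriek {A B : nzRingType} (f : A -> B) (J : A -> Prop) (M : modT A)
  : modT B :=
  @ModT B (mcar M) (fsh_set J M) (fun s x => mact M (sect f s) x)
    (fun n x => fsh_set J M x /\ mdeg M n x).

(* Main.v *)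
Set Warnings "-all".
Require Import Defs.
From HB Require Import structures.
From mathcomp Require Import all_boot all_order all_algebra.
From mathcomp Require Import zify.
From Stdlib Require Import ClassicalEpsilon.
Set Warnings "-all".
Set Implicit Arguments.
Unset Strict Implicit.
Unset Printing Implicit Defensive.
Import Order.TTheory GRing.Theory Num.Theory.
Local Open Scope ring_scope.
Section Graded.
Variables (V : zmodType) (D : V -> Prop) (P : int -> V -> Prop).
Hypothesis HG : graded_dirsum D P.

Definition dec (s : seq int) (c : int -> V) (x : V) :=
  uniq s /\ (forall k, P k (c k)) /\ x = \sum_(k <- s) c k.

Lemma P0 k : P k 0. Proof. by case: HG => [H _]; case: (H k). Qed.
Lemma PB k x y : P k x -> P k y -> P k (x - y).
Proof. by case: HG => [H _] ? ?; case: (H k) => _; apply. Qed.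
Lemma PD k x : P k x -> D x.
Proof. by case: HG => [_ [H _]]; apply: H. Qed.

Lemma sum_mem_if (s s1 : seq int) (c : int -> V) :
  uniq s -> uniq s1 -> (forall k, k \in s1 -> k \in s) ->
  \sum_(k <- s) (if k \in s1 then c k else 0) = \sum_(k <- s1) c k.
Proof.
move=> us us1 sub; rewrite -(big_mkcond (fun k => k \in s1)) /= -big_filter.
apply: perm_big; apply: uniq_perm; first exact: filter_uniq.
  exact: us1.
by move=> k; rewrite mem_filter; case E: (k \in s1) => //=; rewrite sub.
Qed.

Lemma dec_uniq s1 c1 s2 c2 x : dec s1 c1 x -> dec s2 c2 x ->
  forall k, (if k \in s1 then c1 k else 0) = (if k \in s2 then c2 k else 0).
Proof.
move=> [u1 [p1 e1]] [u2 [p2 e2]] k.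
set s := undup (s1 ++ s2).
set d := fun k => (if k \in s1 then c1 k else 0) - (if k \in s2 then c2 k else 0).
have us : uniq s by exact: undup_uniq.
have Pd : forall k, P k (d k).
  by move=> i; rewrite /d; apply: PB; case: ifP => _; first [apply: p1 | apply: p2 | apply: P0].
have sd : \sum_(i <- s) d i = 0.
  rewrite /d sumrB !sum_mem_if //; first by rewrite -e1 -e2 subrr.
    by move=> i hi; rewrite mem_undup mem_cat hi orbT.
  by move=> i hi; rewrite mem_undup mem_cat hi.
case: HG => [_ [_ [_ Hind]]].
case ks: (k \in s).
  by apply/eqP; rewrite -subr_eq0; apply/eqP; exact: (Hind s d us Pd sd k ks).
move: ks; rewrite mem_undup mem_cat; case: (k \in s1); case: (k \in s2) => //.
Qed.

Definition comp (k : int) (x : V) : V :=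
  epsilon (inhabits 0) (fun y => P k y /\ forall s c, dec s c x ->
    y = if k \in s then c k else 0).

Lemma comp_spec k x : P k (comp k x) /\ forall s c, dec s c x ->
    comp k x = if k \in s then c k else 0.
Proof.
rewrite /comp; apply: (epsilon_spec (inhabits (0:V)) (fun y => P k y /\ forall s c, dec s c x ->
    y = if k \in s then c k else 0)).
case: (classic (exists s c, dec s c x)) => [[s [c d1]]|nd].
  exists (if k \in s then c k else 0); split.
    by case: ifP => _; [case: d1 => [_ []] | exact: P0].
  by move=> s' c' d2; exact: dec_uniq d1 d2 k.
exists 0; split; first exact: P0.
by move=> s c d1; exfalso; apply: nd; exists s, c.
Qed.

Lemma compP k x : P k (comp k x). Proof. by case: (comp_spec k x). Qed.
Lemma compE k {s c x} : dec s c x -> comp k x = if k \in s then c k else 0.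
Proof. by case: (comp_spec k x) => _; apply. Qed.

Lemma comp_dec x : D x -> exists s, uniq s /\ x = \sum_(k <- s) comp k x /\
  forall k, k \notin s -> comp k x = 0.
Proof.
case: HG => [_ [_ [H _]]] Dx; case: (H x Dx) => s [c [us [_ [Pc ex]]]].
have d1 : dec s c x by [].
exists s; split => //; split.
  by rewrite ex; apply: eq_big_seq => k ks; rewrite -ex (compE k d1) ks.
by move=> k /negbTE ks; rewrite (compE k d1) ks.
Qed.

Lemma comp_hom {n x} k : P n x -> comp k x = if k == n then x else 0.
Proof.
move=> Px; have d1 : dec [:: n] (fun k => if k == n then x else 0) x.
  split => //; split; last by rewrite big_seq1 eqxx.
  by move=> i; case: eqP => [->|_] //; exact: P0.
by rewrite (compE k d1) mem_seq1; case: eqP.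
Qed.

Lemma comp0 k : comp k 0 = 0.
Proof. by rewrite (comp_hom k (P0 0)); case: eqP. Qed.

Lemma dsum_comp K x : dsum_in P K x -> forall k, ~ K k -> comp k x = 0.
Proof.
move=> [s [c [us [Ks [Pc ex]]]]] k nK.
have d1 : dec s c x by [].
rewrite (compE k d1); case: ifP => // ks; by case: nK; apply: Ks.
Qed.

Lemma SG_comp {N x} k : SG_sub P N -> N 0 -> N x -> N (comp k x).
Proof.
move=> HN N0 Nx; case: (HN x Nx) => s [c [us [Pc ex]]].
have d1 : dec s c x by split => //; split => // i; case: (Pc i).
by rewrite (compE k d1); case: ifP => // _; case: (Pc k).
Qed.

Lemma dsum_sub N K x : SG_sub P N -> N 0 -> N x -> dsum_in P K x ->
  dsum_in (fun k y => N y /\ P k y) K x.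
Proof.
move=> HN N0 Nx dx; case: (dx) => s [c [us [Ks [Pc ex]]]].
have d1 : dec s c x by [].
exists s, (fun k => if k \in s then c k else 0); split => //; split => //; split.
  move=> k; have := SG_comp k HN N0 Nx; rewrite (compE k d1) => Nk; split => //.
  by case: ifP => _ //; exact: P0.
by rewrite ex; apply: eq_big_seq => k ks; rewrite ks.
Qed.

End Graded.
Section Mod.
Variables (A : nzRingType) (M : modT A).
Hypothesis HM : is_module M.

Lemma dom0 : mdom M 0. Proof. by case: HM. Qed.
Lemma domB x y : mdom M x -> mdom M y -> mdom M (x - y).
Proof. by case: HM => [_ [H _]]; apply: H. Qed.
Lemma domN x : mdom M x -> mdom M (- x).
Proof. by move=> h; rewrite -sub0r; apply: domB => //; exact: dom0. Qed.
Lemma domD x y : mdom M x -> mdom M y -> mdom M (x + y).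
Proof. by move=> hx hy; rewrite -(opprK y); apply: domB => //; exact: domN. Qed.
Lemma dom_act r x : mdom M x -> mdom M (mact M r x).
Proof. by case: HM => [_ [_ [H _]]]; apply: H. Qed.
Lemma actD r x y : mdom M x -> mdom M y -> mact M r (x + y) = mact M r x + mact M r y.
Proof. by case: HM => [_ [_ [_ [H _]]]]; apply: H. Qed.
Lemma actDr r s x : mdom M x -> mact M (r + s) x = mact M r x + mact M s x.
Proof. by case: HM => [_ [_ [_ [_ [H _]]]]]; apply: H. Qed.
Lemma actM r s x : mdom M x -> mact M (r * s) x = mact M r (mact M s x).
Proof. by case: HM => [_ [_ [_ [_ [_ [H _]]]]]]; apply: H. Qed.
Lemma act1 x : mdom M x -> mact M 1 x = x.
Proof. by case: HM => [_ [_ [_ [_ [_ [_ H]]]]]]; apply: H. Qed.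
Lemma act_r0 r : mact M r 0 = 0.
Proof.
have h := actD r dom0 dom0; rewrite addr0 -{1}(addr0 (mact M r 0)) in h.
by move/addrI: h.
Qed.
Lemma act_0 x : mdom M x -> mact M 0 x = 0.
Proof.
move=> hx; have h := actDr 0 0 hx; rewrite addr0 -{1}(addr0 (mact M 0 x)) in h.
by move/addrI: h.
Qed.
Lemma actB r x y : mdom M x -> mdom M y -> mact M r (x - y) = mact M r x - mact M r y.
Proof.
move=> hx hy; have h := actD r (domB hx hy) hy; rewrite subrK in h.
by rewrite h addrK.
Qed.
Lemma actBr r s x : mdom M x -> mact M (r - s) x = mact M r x - mact M s x.
Proof.
move=> hx; have h := actDr (r - s) s hx; rewrite subrK in h.
by rewrite h addrK.
Qed.
Lemma dom_sum (I : Type) (l : seq I) (F : I -> mcar M) :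
  (forall i, mdom M (F i)) -> mdom M (\sum_(i <- l) F i).
Proof.
move=> h; elim: l => [|a l IH]; first by rewrite big_nil; exact: dom0.
by rewrite big_cons; apply: domD.
Qed.
Lemma act_sum (I : Type) (l : seq I) (F : I -> mcar M) r :
  (forall i, mdom M (F i)) -> mact M r (\sum_(i <- l) F i) = \sum_(i <- l) mact M r (F i).
Proof.
move=> h; elim: l => [|a l IH]; first by rewrite !big_nil act_r0.
by rewrite !big_cons actD ?IH //; apply: dom_sum.
Qed.
Lemma act_suml (I : Type) (l : seq I) (F : I -> A) x :
  mdom M x -> mact M (\sum_(i <- l) F i) x = \sum_(i <- l) mact M (F i) x.
Proof.
move=> hx; elim: l => [|a l IH]; first by rewrite !big_nil act_0.
by rewrite !big_cons actDr ?IH.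
Qed.
End Mod.

Section Hom.
Variables (A : nzRingType) (M N : modT A) (D : mcar M -> Prop) (phi : mcar M -> mcar N).
Hypothesis Hphi : hom_on M N D phi.
Hypothesis D0 : D 0.
Hypothesis DB : forall x y, D x -> D y -> D (x - y).

Lemma DN x : D x -> D (- x). Proof. by move=> h; rewrite -sub0r; apply: DB. Qed.
Lemma DD x y : D x -> D y -> D (x + y).
Proof. by move=> hx hy; rewrite -(opprK y); apply: DB => //; exact: DN. Qed.
Lemma hom_dom x : D x -> mdom N (phi x). Proof. by case: Hphi => [H _]; apply: H. Qed.
Lemma homD x y : D x -> D y -> phi (x + y) = phi x + phi y.
Proof. by case: Hphi => [_ [H _]]; apply: H. Qed.
Lemma hom_act r x : D x -> phi (mact M r x) = mact N r (phi x).
Proof. by case: Hphi => [_ [_ [H _]]]; apply: H. Qed.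
Lemma hom_deg n x : D x -> mdeg M n x -> mdeg N n (phi x).
Proof. by case: Hphi => [_ [_ [_ H]]]; apply: H. Qed.
Lemma hom0 : phi 0 = 0.
Proof.
have h := homD D0 D0; rewrite addr0 -{1}(addr0 (phi 0)) in h.
by move/addrI: h.
Qed.
Lemma homB x y : D x -> D y -> phi (x - y) = phi x - phi y.
Proof.
move=> hx hy; have h := homD (DB hx hy) hy; rewrite subrK in h.
by rewrite h addrK.
Qed.
Lemma hom_sum (I : Type) (l : seq I) (F : I -> mcar M) :
  (forall i, D (F i)) -> phi (\sum_(i <- l) F i) = \sum_(i <- l) phi (F i).
Proof.
move=> h.
have Ds : forall l : seq I, D (\sum_(i <- l) F i).
  by elim=> [|a l' IH]; rewrite ?big_nil ?big_cons //; apply: DD.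
elim: l => [|a l IH]; first by rewrite !big_nil hom0.
by rewrite !big_cons homD ?IH.
Qed.
End Hom.
Definition subT (A : nzRingType) (M : modT A) (P : mcar M -> Prop) : modT A :=
  @ModT A (mcar M) P (mact M) (fun n x => P x /\ mdeg M n x).
Arguments subT {A} M P.

Section SubMod.
Variables (A : nzRingType) (G : int -> A -> Prop) (M : modT A) (P : mcar M -> Prop).
Hypothesis HL : LSG_mod G M.
Hypothesis HP : SG_submod M P.

Lemma LSG_is_module : is_module M. Proof. by case: HL => [[]]. Qed.
Lemma LSG_gd : graded_dirsum (mdom M) (mdeg M). Proof. by case: HL => [[_ []]]. Qed.

Lemma sub_LSG : LSG_mod G (subT M P).
Proof.
have HM := LSG_is_module; have GD := LSG_gd.
case: HP => [[Pd [P0' [PB' Pact]]] Psg].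
case: HL => [[_ [_ HSG]] HLS].
split; first split.
- split => //; split => //; split => //=; split.
    by move=> r x y hx hy; apply: actD => //; apply: Pd.
  split; first by move=> r s x hx; apply: actDr => //; apply: Pd.
  split; first by move=> r s x hx; apply: actM => //; apply: Pd.
  by move=> x hx; apply: act1 => //; apply: Pd.
- split.
  + split => /=.
      move=> n; split; first by split => //; exact: (P0 GD).
      by move=> x y [px dx] [py dy]; split; [apply: PB' | apply: (PB GD)].
    split; first by move=> n x [].
    split.
      move=> x px; apply: (dsum_sub GD) => //.
      by case: GD => [_ [_ [H _]]]; apply: H; apply: Pd.
    move=> s c us Pc; case: GD => [_ [_ [_ H]]]; apply: H => // k.
    by case: (Pc k).
  + move=> m n r x m0 Gr /= [px dx]; apply: (dsum_sub GD) => //.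
      by apply: Pact.
    by apply: HSG.
- by move=> n m r x Rr /= [px dx]; split; [apply: Pact | apply: HLS].
Qed.
End SubMod.

Section Tors.
Variables (A : nzRingType) (G : int -> A -> Prop).

Lemma Rgeq_mull t r x : R_geq G t x -> R_geq G t (r * x).
Proof.
move=> h I HI Hs; have := h I HI Hs.
by case: HI => [[[_ [_ H]] _] _]; apply: H.
Qed.
Lemma Rgeq_mulr t r x : R_geq G t x -> R_geq G t (x * r).
Proof.
move=> h I HI Hs; have := h I HI Hs.
by case: HI => [[_ H] _]; apply: H.
Qed.
Lemma Rgeq0 t : R_geq G t 0.
Proof. by move=> I [[[H _] _] _] _. Qed.
Lemma Rgeq_mono t t' x : (t <= t')%N -> R_geq G t' x -> R_geq G t x.
Proof.
move=> tt h I HI Hs; apply: h => // y [s [c [us [Ks rest]]]]; apply: Hs.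
exists s, c; split => //; split => // k ks; have := Ks k ks.
by apply: le_trans; rewrite lez_nat.
Qed.

Lemma ipow_I (I I' : A -> Prop) n a : (forall y, I y -> I' y) -> ipow I n a -> ipow I' n a.
Proof.
case: n => //= n h [ss [Hss ->]]; exists ss; split => // s ss_s.
by case: (Hss s ss_s) => sz Hs; split => // a' ha; apply: h; apply: Hs.
Qed.

Lemma prod_in (I : A -> Prop) (s : seq A) : (forall r y, I y -> I (r * y)) ->
  s != [::] -> (forall a, a \in s -> I a) -> I (\prod_(a <- s) a).
Proof.
move=> Hl; elim: s => [|x l IH] //= _ Hs; rewrite big_cons.
case: l IH Hs => [|y l] IH Hs.
  by rewrite big_nil mulr1; apply: Hs; rewrite mem_seq1.
apply: Hl; apply: IH => // a ha; apply: Hs; by rewrite in_cons ha orbT.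
Qed.

Lemma ipow_mono (I : A -> Prop) n n' a : (forall r y, I y -> I (r * y)) ->
  (n <= n')%N -> ipow I n' a -> ipow I n a.
Proof.
move=> Hl; case: n => // n; case: n' => // n' le /= [ss [Hss ->]].
exists (map (fun s => rcons (take n s) (\prod_(x <- drop n s) x)) ss); split.
  move=> s' /mapP [s ss_s ->]; case: (Hss s ss_s) => sz Hs; split.
    by rewrite size_rcons size_take sz le.
  move=> a'; rewrite mem_rcons in_cons => /orP [/eqP ->|].
    apply: prod_in => //.
      by rewrite -size_eq0 size_drop sz subn_eq0 -ltnNge le.
    by move=> b hb; apply: Hs; apply: mem_drop hb.
  by move=> hb; apply: Hs; apply: mem_take hb.
rewrite big_map; apply: eq_bigr => s _.
by rewrite -cats1 big_cat big_seq1 /= -big_cat cat_take_drop.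
Qed.

Lemma ipow_mulr (I : A -> Prop) n a r : (forall r y, I y -> I (y * r)) ->
  ipow I n a -> ipow I n (a * r).
Proof.
move=> Hr; case: n => // n /= [ss [Hss ->]].
exists (map (fun s => match s with [::] => [::] | x :: l => rcons (belast x l) (last x l * r) end) ss).
split.
  move=> s' /mapP [s ss_s ->]; case: (Hss s ss_s) => sz Hs.
  case: s sz Hs {ss_s} => [|x l] //= sz Hs; split.
    by rewrite size_rcons size_belast.
  move=> b; rewrite mem_rcons in_cons => /orP [/eqP ->|hb].
    by apply: Hr; apply: Hs; rewrite lastI mem_rcons mem_head.
  by apply: Hs; rewrite lastI mem_rcons in_cons hb orbT.
rewrite big_map mulr_suml; apply: eq_big_seq => s ss_s.
case: (Hss s ss_s) => sz _; case: s sz {ss_s} => [|x l] // _.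
by rewrite [in LHS](lastI x l) -!cats1 !big_cat !big_seq1 /= mulrA.
Qed.
End Tors.
Section TorsM.
Variables (A : nzRingType) (G : int -> A -> Prop) (M : modT A).
Hypothesis HM : is_module M.

Lemma tors0 : torsion G M 0.
Proof. by split; [exact: dom0 | exists 0%N, 0%N => a _; exact: act_r0]. Qed.

Lemma ipow_geq_mono t t' n n' a : (t <= t')%N -> (n <= n')%N ->
  ipow (R_geq G t') n' a -> ipow (R_geq G t) n a.
Proof.
move=> tt nn h; apply: (ipow_mono (n' := n')) => //.
  by move=> r y; apply: Rgeq_mull.
by apply: ipow_I h => y; apply: Rgeq_mono.
Qed.

Lemma torsB x y : torsion G M x -> torsion G M y -> torsion G M (x - y).
Proof.
move=> [dx [n1 [t1 h1]]] [dy [n2 [t2 h2]]]; split; first exact: domB.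
exists (maxn n1 n2), (maxn t1 t2) => a ha.
rewrite actB // h1 ?h2 ?subrr //; apply: ipow_geq_mono ha;
  by rewrite ?leq_maxl ?leq_maxr.
Qed.

Lemma tors_act r x : torsion G M x -> torsion G M (mact M r x).
Proof.
move=> [dx [n [t h]]]; split; first exact: dom_act.
exists n, t => a ha; rewrite -actM // h //; apply: ipow_mulr => //.
by move=> r' y; apply: Rgeq_mulr.
Qed.

Lemma tors_dom x : torsion G M x -> mdom M x. Proof. by case. Qed.
End TorsM.

Lemma tors_SG (A : nzRingType) (G : int -> A -> Prop) (M : modT A) :
  LSG_mod G M -> (forall x k, torsion G M x -> torsion G M (comp (mdeg M) k x)) ->
  SG_submod M (torsion G M).
Proof.
move=> HL Hc; have HM := LSG_is_module HL; have GD := LSG_gd HL.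
split.
  split; first by move=> x; apply: tors_dom.
  split; first exact: tors0.
  split; first by move=> x y; apply: torsB.
  by move=> r x; apply: tors_act.
move=> x tx; case: (comp_dec GD (tors_dom tx)) => s [us [ex _]].
exists s, (fun k => comp (mdeg M) k x); split => //; split => // k.
by split; [exact: (compP GD) | apply: Hc].
Qed.

Lemma TF (A : nzRingType) (G : int -> A -> Prop) (E : modT A) :
  T_closed G E -> (forall x k, torsion G E x -> torsion G E (comp (mdeg E) k x)) ->
  forall x, torsion G E x -> x = 0.
Proof.
move=> [HL HT] Hc x tx.
have HM := LSG_is_module HL; have GD := LSG_gd HL.
have HS := tors_SG HL Hc.
have HL0 := sub_LSG HL HS.
have HN : SG_submod (subT E (torsion G E)) (fun y => y = 0).
  split.
    split; first by move=> y ->; exact: tors0.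
    split => //; split; first by move=> a b -> ->; rewrite subrr.
    by move=> r y -> /=; rewrite act_r0.
  move=> y ->; exists [::], (fun _ => 0); split => //; split; last by rewrite big_nil.
  by move=> k; split => //; split; [exact: tors0 | exact: (P0 GD)].
have Hq : quot_torsion G (subT E (torsion G E)) (fun y => y = 0).
  by move=> y /= [_ [n [t h]]]; exists n, t => a ha; apply: h.
have Hid : ghom (subT E (torsion G E)) E id.
  split; first by move=> y /= ty; apply: tors_dom ty.
  by split => //; split => //; move=> n y _ [].
have H0 : ghom (subT E (torsion G E)) E (fun _ => 0).
  split; first by move=> *; exact: dom0.
  split; first by move=> *; rewrite addr0.
  split; first by move=> *; rewrite act_r0.
  by move=> *; exact: (P0 GD).
have Hphi : hom_on (subT E (torsion G E)) E (fun y => y = 0) id.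
  split; first by move=> y ->; exact: dom0.
  split => //; split => //; move=> n y -> _; exact: (P0 GD).
case: (HT _ _ HL0 HN Hq id Hphi) => _ Hu.
by apply: (Hu id (fun _ => 0) Hid H0) => // y ->.
Qed.
Section Sch.
Variables (A : nzRingType) (G : int -> A -> Prop).

Lemma Rp_mul n m a b : Rp G n a -> Rp G m b -> Rp G (n + m) (a * b).
Proof.
move=> [Ga Ha] [Gb Hb]; split; first by apply: Ha.
by move=> k h Gh; rewrite -mulrA -addrA; apply: Ha; apply: Hb.
Qed.

Lemma Rp_1 : G 0 1 -> Rp G 0 1.
Proof. by move=> G1; split => // k h Gh; rewrite mul1r add0r. Qed.

Lemma Rp_exp n a k : G 0 1 -> Rp G n a -> Rp G (n * k%:Z) (a ^+ k).
Proof.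
move=> G1 Ra; elim: k => [|k IH]; first by rewrite mulr0 expr0; apply: Rp_1.
have -> : n * (k.+1)%:Z = n + n * k%:Z by rewrite -[k.+1]addn1 PoszD mulrDr mulr1 addrC.
by rewrite exprS; apply: Rp_mul.
Qed.

Lemma prod_nseq n (b : A) : \prod_(i <- nseq n b) i = b ^+ n.
Proof. by elim: n => [|n IH]; rewrite ?big_nil ?expr0 // big_cons IH exprS. Qed.

Lemma ipow_pow (I : A -> Prop) n b : I b -> ipow I n.+1 (b ^+ n.+1).
Proof.
move=> Ib /=; exists [:: nseq n.+1 b]; split; last by rewrite big_seq1 prod_nseq.
move=> s; rewrite mem_seq1 => /eqP ->; split; first by rewrite size_nseq.
by move=> a; rewrite mem_nseq => /andP [_ /eqP ->].
Qed.

Lemma Ore_pow (S : A -> Prop) s k : left_Ore S -> S s -> S (s ^+ k).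
Proof.
move=> [S1 [SM _]] Ss; elim: k => [|k IH]; first by rewrite expr0.
by rewrite exprS; apply: SM.
Qed.

Hypothesis GR : graded_dirsum (fun _ => True) G.
Hypothesis G1 : G 0 1.

Lemma pos_deg d s : G d s -> dsum_in G (fun k => 1 <= k) s -> s = 0 \/ 1 <= d.
Proof.
move=> Gs ds; have := comp_hom GR d Gs; rewrite eqxx => e.
case: (ds) => l [c [ul [Kl [Pc ex]]]].
have d1 : dec G l c s by [].
rewrite (compE GR d d1) in e; move: e; case: ifP => dl e.
  by right; apply: Kl.
by left.
Qed.

Lemma pow_Rgeq d s t : Rp G d s -> s = 0 \/ 1 <= d -> R_geq G t (s ^+ t).
Proof.
move=> Rs [->|d1].
  case: t => [|t]; last by rewrite expr0n; apply: Rgeq0.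
  rewrite expr0 => I HI Hs; apply: Hs.
  exists [:: 0], (fun k => if k == 0 then 1 else 0); split => //; split.
    by move=> k; rewrite mem_seq1 => /eqP ->.
  split; last by rewrite big_seq1 eqxx.
  by move=> k; case: eqP => [->|_] //; exact: (P0 GR).
have [Gp _] := Rp_exp t G1 Rs.
move=> I HI Hs; apply: Hs.
exists [:: d * t%:Z], (fun k => if k == d * t%:Z then s ^+ t else 0); split => //; split.
  by move=> k; rewrite mem_seq1 => /eqP ->; nia.
split; last by rewrite big_seq1 eqxx.
by move=> k; case: eqP => [->|_] //; exact: (P0 GR).
Qed.

Lemma kill_comp (M : modT A) e a x k : LSG_mod G M -> Rp G e a -> mdom M x ->
  mact M a x = 0 -> mact M a (comp (mdeg M) k x) = 0.
Proof.
move=> HL Ra dx ax.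
have HM := LSG_is_module HL; have GD := LSG_gd HL.
case: HL => _ HLS.
case: (comp_dec GD dx) => s [us [ex nz]].
set c := fun k' => mact M a (comp (mdeg M) (k' - e) x).
have Pc : forall k', mdeg M k' (c k').
  move=> k'; rewrite /c; have := HLS e (k' - e) a _ Ra (compP GD (k' - e) x).
  by rewrite (addrC e) subrK.
have um : uniq (map (fun k' => k' + e) s).
  by rewrite map_inj_uniq // => i j /addIr.
have sm : \sum_(k' <- map (fun k' => k' + e) s) c k' = 0.
  rewrite big_map /c; under eq_bigr do rewrite addrK.
  rewrite -(act_sum HM); first by rewrite -ex.
  by move=> i; apply: (PD GD); apply: (compP GD).
case: GD => [_ [_ [_ Hind]]].
case ks: (k \in s).
  have := Hind _ _ um Pc sm (k + e); rewrite /c addrK; apply.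
  by apply: (map_f (fun k0 => k0 + e)).
by rewrite nz ?ks // act_r0.
Qed.

Lemma sch_comp (M : modT A) x k : schematic G -> LSG_mod G M ->
  torsion G M x -> torsion G M (comp (mdeg M) k x).
Proof.
move=> [_ [_ [Is [HIs Hsch]]]] HL [dx [n [t h]]].
have HM := LSG_is_module HL; have GD := LSG_gd HL.
split; first by apply: (PD GD); apply: (compP GD).
case: n h => [|n] h.
  have x0 : x = 0 by rewrite -(act1 HM dx); apply: h.
  by exists 0%N, 0%N => a _; rewrite x0 (comp0 GD) act_r0.
pose Si i := nth (fun _ => False) Is i.
pose sel i := epsilon (inhabits (0:A)) (fun s => Si i s /\ dsum_in G (fun k => 1 <= k) s).
have selP : forall i, (i < size Is)%N -> Si i (sel i) /\ dsum_in G (fun k => 1 <= k) (sel i).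
  move=> i hi; rewrite /sel; apply: (epsilon_spec (inhabits (0:A)) (fun s => Si i s /\ dsum_in G (fun k => 1 <= k) s)).
  by case: (HIs i hi) => _ [s [hs ds]]; exists s.
pose xs := mkseq (fun i => sel i ^+ (t * n.+1)) (size Is).
have sz : size xs = size Is by rewrite size_mkseq.
have kill : forall i, (i < size Is)%N -> Si i (nth 0 xs i) /\ mact M (nth 0 xs i) (comp (mdeg M) k x) = 0.
  move=> i hi; rewrite nth_mkseq //.
  case: (HIs i hi) => [[HOre [Hpp _]] _]; case: (selP i hi) => si ds.
  split; first by apply: Ore_pow.
  case: (Hpp _ si) => d [Rd _].
  apply: (kill_comp (e := d * (t * n.+1)%N%:Z)) => //; first by apply: Rp_exp.
  apply: h; rewrite exprM; apply: ipow_pow.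
  apply: (pow_Rgeq Rd); case: Rd => Gd _; exact: pos_deg.
case: (Hsch xs sz (fun i hi => proj1 (kill i hi))) => t' [m' H'].
exists m', t' => a ha; case: (H' a ha) => rs [_ ->].
rewrite (act_suml HM); last by apply: (PD GD); apply: (compP GD).
apply: big1 => i _; rewrite (actM HM); last by apply: (PD GD); apply: (compP GD).
by rewrite (proj2 (kill i _)) ?(act_r0 HM) // -sz.
Qed.
End Sch.
Lemma img_SG (A : nzRingType) (M1 M2 : modT A) psi :
  is_module M1 -> graded_dirsum (mdom M1) (mdeg M1) -> is_module M2 ->
  ghom M1 M2 psi -> SG_submod M2 (fun y => exists x, mdom M1 x /\ psi x = y).
Proof.
move=> HM1 GD1 HM2 Hp.
have D0 := dom0 HM1; have DB := @domB _ _ HM1.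
split.
  split; first by move=> y [x [dx <-]]; apply: (hom_dom Hp).
  split; first by exists 0; split => //; rewrite (hom0 Hp).
  split; first by move=> _ _ [x [dx <-]] [y [dy <-]]; exists (x - y); split;
    [exact: DB | rewrite (homB Hp)].
  by move=> r _ [x [dx <-]]; exists (mact M1 r x); split;
    [exact: dom_act | rewrite (hom_act Hp)].
move=> _ [x [dx <-]]; case: (comp_dec GD1 dx) => s [us [ex _]].
exists s, (fun k => psi (comp (mdeg M1) k x)); split => //; split.
  move=> k; split; first by apply: (hom_deg Hp); [apply: (PD GD1) |]; apply: (compP GD1).
  by exists (comp (mdeg M1) k x); split => //; apply: (PD GD1); apply: (compP GD1).
rewrite {1}ex (hom_sum Hp) // => k; apply: (PD GD1); apply: (compP GD1).
Qed.

Lemma inj_refl (A : nzRingType) (M1 M2 : modT A) psi n y :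
  is_module M1 -> graded_dirsum (mdom M1) (mdeg M1) -> graded_dirsum (mdom M2) (mdeg M2) ->
  ghom M1 M2 psi -> (forall x, mdom M1 x -> psi x = 0 -> x = 0) ->
  mdom M1 y -> mdeg M2 n (psi y) -> mdeg M1 n y.
Proof.
move=> HM1 GD1 GD2 Hp inj dy dn.
have D0 := dom0 HM1; have DB := @domB _ _ HM1.
case: (comp_dec GD1 dy) => s [us [ex nz]].
have dc : forall k, mdom M1 (comp (mdeg M1) k y) by move=> k; apply: (PD GD1); apply: (compP GD1).
have d1 : dec (mdeg M2) s (fun k => psi (comp (mdeg M1) k y)) (psi y).
  split => //; split; first by move=> k; apply: (hom_deg Hp) => //; apply: (compP GD1).
  by rewrite {1}ex (hom_sum Hp).
have z : forall k, k != n -> comp (mdeg M1) k y = 0.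
  move=> k kn; case ks: (k \in s); last by rewrite nz ?ks.
  apply: inj => //; have := compE GD2 k d1; rewrite ks => <-.
  by rewrite (comp_hom GD2 k dn) (negbTE kn).
case ns: (n \in s).
  have -> : y = comp (mdeg M1) n y.
    rewrite {1}ex (bigD1_seq n) //= big1 ?addr0 // => k kn; exact: z.
  exact: compP GD1 n y.
have -> : y = 0.
  rewrite ex big_seq big1 // => k ks; apply: z; apply/eqP => kn.
  by rewrite kn ns in ks.
exact: P0 GD1 n.
Qed.

Lemma ghom_comp (A : nzRingType) (M1 M2 M3 : modT A) g1 g2 :
  ghom M1 M2 g1 -> ghom M2 M3 g2 -> ghom M1 M3 (g2 \o g1).
Proof.
move=> H1 H2; split; first by move=> x dx; apply: (hom_dom H2); apply: (hom_dom H1).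
split; first by move=> x y dx dy /=; rewrite (homD H1) // (homD H2) //; apply: (hom_dom H1).
split; first by move=> r x dx /=; rewrite (hom_act H1) // (hom_act H2) //; apply: (hom_dom H1).
by move=> n x dx dn /=; apply: (hom_deg H2); [apply: (hom_dom H1) | apply: (hom_deg H1)].
Qed.
Section Quot.
Variables (R S : nzRingType) (G : int -> R -> Prop) (J : R -> Prop) (f : {rmorphism R -> S}).
Hypothesis GR : graded_dirsum (fun _ => True) G.
Hypothesis G1 : G 0 1.
Hypothesis HJ : SG_ideal G J.
Hypothesis Hsurj : forall s, exists r, f r = s.
Hypothesis Hker : forall r, f r = 0 <-> J r.

Local Notation img := (img_grading f G).

Lemma sectK s : f (sect f s) = s.
Proof.
rewrite /sect; apply: (epsilon_spec (inhabits (0:R)) (fun r => f r = s)).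
exact: Hsurj.
Qed.

Lemma J_of a b : f a = f b -> J (a - b).
Proof. by move=> e; apply/Hker; rewrite rmorphB e subrr. Qed.

Lemma ann_eq (M : modT R) x a b : is_module M -> mdom M x ->
  (forall r, J r -> mact M r x = 0) -> f a = f b -> mact M a x = mact M b x.
Proof.
move=> HM dx Hx e; have -> : a = b + (a - b) by rewrite addrC subrK.
by rewrite (actDr HM) // (Hx (a - b)) ?addr0 //; apply: J_of.
Qed.

Definition liftk (k : int) (y : S) : R := epsilon (inhabits 0) (fun r => G k r /\ f r = y).
Lemma liftkP k y : img k y -> G k (liftk k y) /\ f (liftk k y) = y.
Proof.
move=> h; exact: (epsilon_spec (inhabits (0:R)) (fun r => G k r /\ f r = y)).
Qed.

Lemma JSG_comp k r : J r -> J (comp G k r).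
Proof.
case: HJ => [[[J0 _] _] Jsg] Jr; exact: (SG_comp GR k Jsg J0 Jr).
Qed.

Lemma img_gd : graded_dirsum (fun _ => True) img.
Proof.
split.
  move=> n; split; first by exists 0; split; [exact: (P0 GR) | by rewrite rmorph0].
  by move=> _ _ [a [Ga <-]] [b [Gb <-]]; exists (a - b); split; [exact: (PB GR) | by rewrite rmorphB].
split => //; split.
  move=> y _; case: (Hsurj y) => r <-; case: (comp_dec GR (x:=r) I) => s [us [ex _]].
  exists s, (fun k => f (comp G k r)); split => //; split => //; split.
    by move=> k; exists (comp G k r); split => //; exact: (compP GR).
  by rewrite {1}ex rmorph_sum.
move=> s c us Pc sc k ks.
pose a := \sum_(i <- s) liftk i (c i).
have Ja : J a by apply/Hker; rewrite rmorph_sum -[RHS]sc; apply: eq_bigr => i _; case: (liftkP (Pc i)).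
have d1 : dec G s (fun i => liftk i (c i)) a.
  by split => //; split => // i; case: (liftkP (Pc i)).
have := JSG_comp k Ja; rewrite (compE GR k d1) ks => /Hker.
by case: (liftkP (Pc k)) => _ ->.
Qed.

Lemma comp_img k r : comp img k (f r) = f (comp G k r).
Proof.
case: (comp_dec GR (x:=r) I) => s [us [ex nz]].
have d1 : dec img s (fun k => f (comp G k r)) (f r).
  split => //; split; last by rewrite {1}ex rmorph_sum.
  by move=> i; exists (comp G i r); split => //; exact: (compP GR).
rewrite (compE img_gd k d1); case: ifP => // /negbT ks.
by rewrite nz // rmorph0.
Qed.

Lemma preim_SG I' : SG_ideal img I' -> SG_ideal G (fun r => I' (f r)).
Proof.
move=> [[[I0 [IB IM]] IMr] Isg]; split.
  split; first split; first by rewrite rmorph0.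
    split; first by move=> x y hx hy; rewrite rmorphB; apply: IB.
    by move=> r x hx; rewrite rmorphM; apply: IM.
  by move=> r x hx; rewrite rmorphM; apply: IMr.
move=> r Ir; case: (comp_dec GR (x:=r) I) => s [us [ex _]].
exists s, (fun k => comp G k r); split => //; split => // k.
split; first exact: (compP GR).
by rewrite -comp_img; apply: (SG_comp img_gd k Isg I0 Ir).
Qed.

Lemma f_dsum K y : dsum_in G K y -> dsum_in img K (f y).
Proof.
move=> [s [c [us [Ks [Pc ->]]]]]; exists s, (fun k => f (c k)).
split => //; split => //; split; last by rewrite rmorph_sum.
by move=> k; exists (c k).
Qed.

Lemma fRgeq t a : R_geq G t a -> R_geq img t (f a).
Proof.
move=> h I' HI' Hs; apply: (h _ (preim_SG HI')) => y dy.
by apply: Hs; apply: f_dsum.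
Qed.

Lemma Rgeq_sub t x y : R_geq G t x -> R_geq G t y -> R_geq G t (x - y).
Proof.
move=> hx hy I HI Hs; case: (HI) => [[[_ [IB _]] _] _]; apply: IB; [exact: hx | exact: hy].
Qed.

Lemma Rgeq_comp t k a : R_geq G t a -> R_geq G t (comp G k a).
Proof.
move=> h I HI Hs; case: (HI) => [[[I0 _] _] Isg].
by apply: (SG_comp GR k Isg I0); apply: h.
Qed.

Lemma Rgeq_lift t b : R_geq img t b -> exists a, R_geq G t a /\ f a = b.
Proof.
move=> h; apply: (h (fun y => exists a, R_geq G t a /\ f a = y)).
  split; first split; first split.
  - by exists 0; split; [exact: Rgeq0 | by rewrite rmorph0].
  - split; first by move=> _ _ [x [hx <-]] [y [hy <-]]; exists (x - y); split;
      [exact: Rgeq_sub | by rewrite rmorphB].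
    move=> r _ [x [hx <-]]; case: (Hsurj r) => r0 <-; exists (r0 * x); split;
      [exact: Rgeq_mull | by rewrite rmorphM].
  - move=> r _ [x [hx <-]]; case: (Hsurj r) => r0 <-; exists (x * r0); split;
      [exact: Rgeq_mulr | by rewrite rmorphM].
  - move=> _ [a [ha <-]]; case: (comp_dec GR (x:=a) I) => s [us [ex _]].
    exists s, (fun k => f (comp G k a)); split => //; split.
      move=> k; split; first by exists (comp G k a); split => //; exact: (compP GR).
      by exists (comp G k a); split => //; apply: Rgeq_comp.
    by rewrite {1}ex rmorph_sum.
move=> y [s [c [us [Ks [Pc ->]]]]].
exists (\sum_(i <- s) liftk i (c i)); split.
  move=> I HI Hs; apply: Hs; exists s, (fun i => liftk i (c i)); split => //; split => //.
  by split => // i; case: (liftkP (Pc i)).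
by rewrite rmorph_sum; apply: eq_bigr => i _; case: (liftkP (Pc i)).
Qed.

Lemma ipow_f t n a : ipow (R_geq G t) n a -> ipow (R_geq img t) n (f a).
Proof.
case: n => // n /= [ss [Hss ->]]; exists (map (map f) ss); split.
  move=> s' /mapP [s ss_s ->]; case: (Hss s ss_s) => sz Hs; split; first by rewrite size_map.
  by move=> b /mapP [a' ha' ->]; apply: fRgeq; apply: Hs.
rewrite rmorph_sum big_map; apply: eq_bigr => s _; by rewrite rmorph_prod big_map.
Qed.

Definition liftR t (y : S) : R := epsilon (inhabits 0) (fun a => R_geq G t a /\ f a = y).
Lemma liftRP t y : R_geq img t y -> R_geq G t (liftR t y) /\ f (liftR t y) = y.
Proof.
move=> h; apply: (epsilon_spec (inhabits (0:R)) (fun a => R_geq G t a /\ f a = y)).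
exact: Rgeq_lift.
Qed.

Lemma ipow_lift t n b : ipow (R_geq img t) n b -> exists a, ipow (R_geq G t) n a /\ f a = b.
Proof.
case: n => [_|n /= [ss [Hss ->]]]; first by exists (sect f b); split => //; exact: sectK.
exists (\sum_(s <- map (map (liftR t)) ss) \prod_(a <- s) a); split.
  exists (map (map (liftR t)) ss); split => //.
  move=> s' /mapP [s ss_s ->]; case: (Hss s ss_s) => sz Hs; split; first by rewrite size_map.
  by move=> a /mapP [y hy ->]; case: (liftRP (Hs y hy)).
rewrite rmorph_sum big_map; apply: eq_big_seq => s ss_s.
rewrite rmorph_prod big_map; apply: eq_big_seq => y hy.
by case: (Hss s ss_s) => _ Hs; case: (liftRP (Hs y hy)).
Qed.

Lemma Rp_f n r : Rp G n r -> Rp img n (f r).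
Proof.
move=> [Gr Hr]; split; first by exists r.
by move=> m _ [h [Gh <-]]; exists (r * h); split; [apply: Hr | by rewrite rmorphM].
Qed.

Lemma tors_fstar (N : modT S) x : torsion img N x <-> torsion G (fstar f N) x.
Proof.
split.
  move=> [dx [n [t h]]]; split => //; exists n, t => a ha /=; apply: h.
  exact: ipow_f.
move=> [dx [n [t h]]]; split => //; exists n, t => b hb.
by case: (ipow_lift hb) => a [ha <-]; apply: h.
Qed.

Lemma fstar_mod (N : modT S) : is_module N -> is_module (fstar f N).
Proof.
move=> HM; split; first exact: (dom0 HM).
split; first by move=> x y; apply: (domB HM).
split; first by move=> r x /=; apply: (dom_act HM).
split; first by move=> r x y /=; apply: (actD HM).
split; first by move=> r s x dx /=; rewrite rmorphD (actDr HM).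
split; first by move=> r s x dx /=; rewrite rmorphM (actM HM).
by move=> x dx /=; rewrite rmorph1 (act1 HM).
Qed.

Lemma fstar_LSG (N : modT S) : LSG_mod img N -> LSG_mod G (fstar f N).
Proof.
move=> [[HM [GD HSG]] HLS]; split; first split.
- exact: fstar_mod.
- split; first exact: GD.
  move=> m n r x m0 Gr dx /=; apply: HSG => //; by exists r.
- by move=> n m r x Rr dx /=; apply: HLS => //; apply: Rp_f.
Qed.

Lemma compS (N : modT S) x k : schematic G -> LSG_mod img N ->
  torsion img N x -> torsion img N (comp (mdeg N) k x).
Proof.
move=> Hs HL /tors_fstar tx; apply/tors_fstar.
exact: (sch_comp GR G1 k Hs (fstar_LSG HL) tx).
Qed.

Lemma TF_S (N : modT S) x : schematic G -> T_closed img N -> torsion img N x -> x = 0.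
Proof.
move=> Hs HT; apply: (TF HT) => y k; apply: compS => //; by case: HT.
Qed.

Lemma TF_R (E : modT R) x : schematic G -> T_closed G E -> torsion G E x -> x = 0.
Proof.
move=> Hs HT; apply: (TF HT) => y k; apply: (sch_comp GR G1) => //; by case: HT.
Qed.

Definition desc (M : modT R) : modT S :=
  @ModT S (mcar M) (mdom M) (fun s x => mact M (sect f s) x) (mdeg M).

Lemma desc_LSG (M : modT R) : compatible G f -> LSG_mod G M ->
  (forall r x, J r -> mdom M x -> mact M r x = 0) -> LSG_mod img (desc M).
Proof.
move=> Hc HL Ha; have HM := LSG_is_module HL; have GD := LSG_gd HL.
case: HL => [[_ [_ HSG]] HLS].
have ae : forall x a b, mdom M x -> f a = f b -> mact M a x = mact M b x.
  by move=> x a b dx e; apply: (ann_eq HM dx) => // r Jr; apply: Ha.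
split; first split.
- split; first exact: (dom0 HM).
  split; first by move=> x y; apply: (domB HM).
  split; first by move=> r x /=; apply: (dom_act HM).
  split; first by move=> r x y /=; apply: (actD HM).
  split; first by move=> r s x dx /=; rewrite -(actDr HM) //; apply: ae => //; rewrite rmorphD !sectK.
  split; first by move=> r s x dx /=; rewrite -(actM HM) //; apply: ae => //; rewrite rmorphM !sectK.
  by move=> x dx /=; rewrite -{2}(act1 HM dx); apply: ae => //; rewrite rmorph1 sectK.
- split; first exact: GD.
  move=> m n r x m0 [r0 [Gr0 <-]] dx /=.
  rewrite (ae x _ r0) ?sectK //; first exact: HSG.
  exact: (PD GD dx).
- move=> n m s x Rs dx /=; have dx' := PD GD dx.
  case: (proj2 (Hc s) (ex_intro _ n Rs)) => r [[n' Rr] fr].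
  case: (eqVneq n n') => [en|nn].
    by rewrite -en in Rr; rewrite (ae x _ r) ?sectK //; apply: HLS.
  have s0 : s = 0.
    case: Rs => Gs _; case: Rr => Gr _.
    have h1 := comp_hom img_gd n Gs; have h2 : img n' s by exists r.
    have := comp_hom img_gd n h2; rewrite h1 eqxx (negbTE nn) => ->.
    by [].
  rewrite s0 (ae x _ 0) ?sectK ?rmorph0 // (act_0 HM dx').
  exact: (P0 GD).
Qed.


Lemma sum_SG (M : modT R) P1 P2 : LSG_mod G M -> SG_submod M P1 -> SG_submod M P2 ->
  SG_submod M (fun z => exists a b, P1 a /\ P2 b /\ z = a + b).
Proof.
move=> HL [[d1 [z1 [B1 A1]]] S1] [[d2 [z2 [B2 A2]]] S2].
have HM := LSG_is_module HL; have GD := LSG_gd HL.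
split.
  split; first by move=> _ [a [b [pa [pb ->]]]]; apply: (domD HM); [apply: d1 | apply: d2].
  split; first by exists 0, 0; rewrite addr0.
  split.
    move=> _ _ [a1 [b1 [pa1 [pb1 ->]]]] [a2 [b2 [pa2 [pb2 ->]]]].
    exists (a1 - a2), (b1 - b2); split; first exact: B1.
    by split; [exact: B2 | rewrite opprD addrACA].
  move=> r _ [a [b [pa [pb ->]]]]; exists (mact M r a), (mact M r b).
  by split; [exact: A1 | split; [exact: A2 | rewrite (actD HM); [|apply: d1|apply: d2]]].
move=> _ [a [b [pa [pb ->]]]].
case: (comp_dec GD (d1 _ pa)) => s1 [u1 [e1 n1]].
case: (comp_dec GD (d2 _ pb)) => s2 [u2 [e2 n2]].
exists (undup (s1 ++ s2)), (fun k => comp (mdeg M) k a + comp (mdeg M) k b).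
split; first exact: undup_uniq.
split.
  move=> k; split.
    by rewrite -[comp _ k b]opprK; apply: (PB GD); [exact: (compP GD) | rewrite -sub0r; apply: (PB GD); [exact: (P0 GD) | exact: (compP GD)]].
  exists (comp (mdeg M) k a), (comp (mdeg M) k b); split; first exact: (SG_comp GD k S1 z1 pa).
  by split => //; exact: (SG_comp GD k S2 z2 pb).
rewrite big_split /=; congr (_ + _).
  rewrite {1}e1 -(@sum_mem_if _ (undup (s1 ++ s2)) s1 (fun k => comp (mdeg M) k a) (undup_uniq _) u1); last by move=> k ks; rewrite mem_undup mem_cat ks.
  by apply: eq_bigr => k _; case: ifP => // /negbT ks; rewrite n1.
rewrite {1}e2 -(@sum_mem_if _ (undup (s1 ++ s2)) s2 (fun k => comp (mdeg M) k b) (undup_uniq _) u2); last by move=> k ks; rewrite mem_undup mem_cat ks orbT.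
by apply: eq_bigr => k _; case: ifP => // /negbT ks; rewrite n2.
Qed.

Lemma zero_SG (M : modT R) : LSG_mod G M -> SG_submod M (fun y => y = 0).
Proof.
move=> HL; have HM := LSG_is_module HL; have GD := LSG_gd HL.
split.
  split; first by move=> y ->; exact: (dom0 HM).
  split => //; split; first by move=> a b -> ->; rewrite subrr.
  by move=> r y ->; rewrite (act_r0 HM).
move=> y ->; exists [::], (fun _ => 0); split => //; split; last by rewrite big_nil.
by move=> k; split => //; exact: (P0 GD).
Qed.

Lemma fsh_SG (M : modT R) : LSG_mod G M -> SG_submod M (fsh_set J M).
Proof.
move=> HL; have HM := LSG_is_module HL; have GD := LSG_gd HL.
split.
  split; first by move=> x [P [[[Pd _] _] [_ Px]]]; apply: Pd.
  split.
    rewrite /fsh_set; exists (fun y => y = 0); split; first exact: zero_SG.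
    by split => // r y _ ->; rewrite (act_r0 HM).
  split.
    move=> x y [P1 [H1 [a1 p1]]] [P2 [H2 [a2 p2]]].
    rewrite /fsh_set; exists (fun z => exists a b, P1 a /\ P2 b /\ z = a + b); split; first exact: sum_SG.
    split.
      move=> r _ Jr [a [b [pa [pb ->]]]].
      case: H1 => [[d1 _] _]; case: H2 => [[d2 _] _].
      rewrite (actD HM); [ | exact: d1 | exact: d2].
      by rewrite (a1 r a Jr pa) (a2 r b Jr pb) addr0.
    exists x, (- y); split => //; split => //.
    by case: H2 => [[_ [z2 [B2 _]]] _]; rewrite -sub0r; apply: B2.
  move=> r x [P [HP [Pa Px]]]; rewrite /fsh_set; exists P; split => //; split => //.
  by case: HP => [[_ [_ [_ Act]]] _]; apply: Act.
move=> x [P [HP [Pa Px]]]; case: (HP) => [_ Psg]; case: (Psg x Px) => s [c [us [Pc ex]]].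
exists s, c; split => //; split => // k; case: (Pc k) => dk pk; split => //.
by rewrite /fsh_set; exists P; do !split => //.
Qed.

Lemma fsh_ann (M : modT R) y r : fsh_set J M y -> J r -> mact M r y = 0.
Proof. by move=> [P [_ [Pa Py]]] Jr; apply: Pa. Qed.

Lemma fshriek_LSG (M : modT R) : compatible G f -> LSG_mod G M ->
  LSG_mod img (fshriek f J M).
Proof.
move=> Hc HL; change (LSG_mod img (desc (subT M (fsh_set J M)))).
apply: desc_LSG => //; first by apply: sub_LSG => //; exact: fsh_SG.
by move=> r x Jr fx; exact: (fsh_ann fx Jr).
Qed.

Lemma fsh_dom (M : modT R) y : fsh_set J M y -> mdom M y.
Proof. by move=> [P [[[Pd _] _] [_ Py]]]; apply: Pd. Qed.

Lemma fsh_ae (M : modT R) y a b : is_module M -> fsh_set J M y -> f a = f b ->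
  mact M a y = mact M b y.
Proof.
move=> HM fy e; apply: (ann_eq HM (fsh_dom fy)) => // r Jr; exact: fsh_ann fy Jr.
Qed.

Lemma conv_hom (M' : modT S) (M : modT R) D p : is_module M ->
  hom_on M' (fshriek f J M) D p -> hom_on (fstar f M') M D p.
Proof.
move=> HM H; split; first by move=> x dx; apply: fsh_dom; apply: (hom_dom H).
split; first by move=> x y dx dy; apply: (homD H).
split.
  move=> r x dx /=; rewrite (hom_act H) //=; apply: fsh_ae => //; first exact: (hom_dom H).
  by rewrite sectK.
by move=> n x dx dn; case: (hom_deg H dx dn).
Qed.

Lemma fsh_image (M1 M : modT R) psi : is_module M1 -> graded_dirsum (mdom M1) (mdeg M1) ->
  is_module M -> ghom M1 M psi ->
  (forall r x, J r -> mdom M1 x -> psi (mact M1 r x) = 0) ->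
  forall x, mdom M1 x -> fsh_set J M (psi x).
Proof.
move=> HM1 GD1 HM Hp Hz x dx; rewrite /fsh_set.
exists (fun y => exists x, mdom M1 x /\ psi x = y); split; first exact: img_SG.
split; last by exists x.
move=> r _ Jr [y [dy <-]]; rewrite -(hom_act Hp) //; exact: Hz.
Qed.

Lemma part1 (M : modT R) : compatible G f -> T_closed G M -> T_closed img (fshriek f J M).
Proof.
move=> Hc [HL HT]; have HM := LSG_is_module HL; have GD := LSG_gd HL.
split; first exact: fshriek_LSG.
move=> M' N' HL' HN' Hq' phi Hphi.
have HM' := LSG_is_module HL'; have GD' := LSG_gd HL'.
have HLf := fstar_LSG HL'.
have HNf : SG_submod (fstar f M') N'.
  case: HN' => [[Nd [N0 [NB Nact]]] Nsg]; split => //; split => //; split => //; split => //.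
  by move=> r x /=; apply: Nact.
have Hqf : quot_torsion G (fstar f M') N'.
  move=> x dx; case: (Hq' x dx) => n [t h]; exists n, t => a ha /=; apply: h.
  exact: ipow_f.
have Hphif := conv_hom HM Hphi.
case: (HT _ _ HLf HNf Hqf phi Hphif) => [[psi [Hpsi agree]] Huniq].
split.
  exists psi; split => //.
  have Hfsh : forall x, mdom M' x -> fsh_set J M (psi x).
    apply: (fsh_image (fstar_mod HM') GD' HM Hpsi) => r x Jr dx /=.
    by rewrite (proj2 (Hker r) Jr) (act_0 HM' dx) (hom0 Hpsi (dom0 HM')).
  split; first exact: Hfsh.
  split; first by move=> x y dx dy; apply: (homD Hpsi).
  split; first by move=> s x dx /=; rewrite -{1}(sectK s); apply: (hom_act Hpsi).
  by move=> n x dx dn; split; [apply: Hfsh | apply: (hom_deg Hpsi)].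
move=> p1 p2 H1 H2 a1 a2 x dx.
exact: (Huniq p1 p2 (conv_hom HM H1) (conv_hom HM H2) a1 a2 x dx).
Qed.

Definition jinv (N : modT S) (E : modT R) (j : mcar N -> mcar E) (e : mcar E) : mcar N :=
  epsilon (inhabits 0) (fun y => mdom N y /\ j y = e).

Section QS.
Variables (N : modT S) (E : modT R) (j : mcar N -> mcar E).
Hypothesis Hsch : schematic G.
Hypothesis HTN : T_closed img N.
Hypothesis HQ : is_Q G (fstar f N) E j.

Lemma QN_mod : is_module N. Proof. by case: HTN => HL _; exact: LSG_is_module HL. Qed.
Lemma QN_gd : graded_dirsum (mdom N) (mdeg N). Proof. by case: HTN => HL _; exact: LSG_gd HL. Qed.
Lemma QE_T : T_closed G E. Proof. by case: HQ. Qed.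
Lemma QE_mod : is_module E. Proof. by case: QE_T => HL _; exact: LSG_is_module HL. Qed.
Lemma QE_gd : graded_dirsum (mdom E) (mdeg E). Proof. by case: QE_T => HL _; exact: LSG_gd HL. Qed.
Lemma Qj : ghom (fstar f N) E j. Proof. by case: HQ => [_ []]. Qed.

Lemma j_inj0 x : mdom N x -> j x = 0 -> x = 0.
Proof.
move=> dx jx; case: HQ => [_ [_ [Hk _]]].
have := proj1 (Hk x dx) jx => /tors_fstar; exact: TF_S.
Qed.

Lemma j_inj x y : mdom N x -> mdom N y -> j x = j y -> x = y.
Proof.
move=> dx dy e; have HM := QN_mod.
apply/eqP; rewrite -subr_eq0; apply/eqP; apply: j_inj0; first exact: (domB HM).
by rewrite (homB Qj) ?e ?subrr //; move=> a b; apply: (domB HM).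
Qed.

Lemma jinvK y : mdom N y -> jinv j (j y) = y.
Proof.
move=> dy; have : mdom N (jinv j (j y)) /\ j (jinv j (j y)) = j y.
  by apply: (epsilon_spec (inhabits (0 : mcar N)) (fun y' => mdom N y' /\ j y' = j y)); exists y.
by case=> d e; apply: j_inj.
Qed.

Lemma j_refl n y : mdom N y -> mdeg E n (j y) -> mdeg N n y.
Proof.
move=> dy dn; apply: (inj_refl (M1 := fstar f N) (fstar_mod QN_mod) QN_gd QE_gd Qj) => //.
exact: j_inj0.
Qed.

Lemma jimg_SG : SG_submod E (fun e => exists y, mdom N y /\ j y = e).
Proof. exact: (img_SG (fstar_mod QN_mod) QN_gd QE_mod Qj). Qed.

Lemma jq : quot_torsion G E (fun e => exists y, mdom N y /\ j y = e).
Proof. by case: HQ => [_ [_ [_ H]]]. Qed.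

Lemma hom_on_j (M : modT R) (h : mcar N -> mcar M) :
  (forall y, mdom N y -> mdom M (h y)) ->
  (forall y1 y2, mdom N y1 -> mdom N y2 -> h (y1 + y2) = h y1 + h y2) ->
  (forall r y, mdom N y -> h (mact N (f r) y) = mact M r (h y)) ->
  (forall n y, mdom N y -> mdeg N n y -> mdeg M n (h y)) ->
  hom_on E M (fun e => exists y, mdom N y /\ j y = e) (fun e => h (jinv j e)).
Proof.
move=> Hd Ha Hact Hdeg; have HM := QN_mod.
split; first by move=> _ [y [dy <-]]; rewrite jinvK //; apply: Hd.
split.
  move=> _ _ [y1 [d1 <-]] [y2 [d2 <-]]; have d12 := domD HM d1 d2.
  by rewrite -(homD Qj) // !jinvK //; apply: Ha.
split; first by move=> r _ [y [dy <-]]; have dr := dom_act HM (f r) dy;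
  rewrite -(hom_act Qj) // !jinvK //; apply: Hact.
by move=> n _ [y [dy <-]] dn; rewrite jinvK //; apply: Hdeg => //; exact: j_refl.
Qed.
End QS.

Lemma ghom_restr (A : nzRingType) (M1 M2 : modT A) (D : mcar M1 -> Prop) g :
  (forall x, D x -> mdom M1 x) -> ghom M1 M2 g -> hom_on M1 M2 D g.
Proof.
move=> HD [h1 [h2 [h3 h4]]]; split; first by move=> x dx; apply: h1; apply: HD.
split; first by move=> x y dx dy; apply: h2; apply: HD.
split; first by move=> r x dx; apply: h3; apply: HD.
by move=> n x dx; apply: h4; apply: HD.
Qed.

Lemma uniq_ext (E M : modT R) (N0 : mcar E -> Prop) g1 g2 :
  T_closed G M -> LSG_mod G E -> SG_submod E N0 -> quot_torsion G E N0 ->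
  ghom E M g1 -> ghom E M g2 -> (forall x, N0 x -> g1 x = g2 x) ->
  forall e, mdom E e -> g1 e = g2 e.
Proof.
move=> [_ HT] HL HN Hq H1 H2 a e de.
have Hr : hom_on E M N0 g1 by apply: ghom_restr H1; case: HN => [[]].
case: (HT _ _ HL HN Hq g1 Hr) => _ Hu.
by apply: (Hu g1 g2 H1 H2) => // x Nx; rewrite a.
Qed.

Lemma part2 (N : modT S) (E M : modT R) (j : mcar N -> mcar E) :
  schematic G -> T_closed img N -> is_Q G (fstar f N) E j -> T_closed G M ->
     (forall g : mcar E -> mcar M, ghom E M g -> ghom N (fshriek f J M) (g \o j)) /\
     (forall h : mcar N -> mcar M, ghom N (fshriek f J M) h ->
        exists g : mcar E -> mcar M, ghom E M g /\ forall x, mdom N x -> g (j x) = h x) /\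
     (forall g1 g2 : mcar E -> mcar M, ghom E M g1 -> ghom E M g2 ->
        (forall x, mdom N x -> g1 (j x) = g2 (j x)) ->
        forall e, mdom E e -> g1 e = g2 e).
Proof.
move=> Hs HTN HQ HTM.
have HMN := QN_mod HTN; have GDN := QN_gd HTN; have HTE := QE_T HQ.
have Hj := Qj HQ.
case: (HTM) => HLM HTM'; have HM := LSG_is_module HLM.
split.
  move=> g Hg; have gj := ghom_comp Hj Hg.
  have Hfsh : forall x, mdom N x -> fsh_set J M (g (j x)).
    apply: (fsh_image (fstar_mod HMN) GDN HM gj) => r x Jr dx /=.
    rewrite (proj2 (Hker r) Jr) (act_0 HMN dx); exact: (hom0 gj (dom0 HMN)).
  split; first exact: Hfsh.
  split; first by move=> x y dx dy; apply: (homD gj).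
  split; first by move=> s x dx /=; rewrite -{1}(sectK s); exact: (hom_act gj (sect f s) dx).
  by move=> n x dx dn; split; [exact: Hfsh | exact: (hom_deg gj)].
split.
  move=> h Hh.
  have Hphi := @hom_on_j N E j Hs HTN HQ M h.
  have := Hphi (fun y dy => fsh_dom (hom_dom Hh dy)) (fun y1 y2 d1 d2 => homD Hh d1 d2) => {}Hphi.
  have := Hphi _ (fun n y dy dn => proj2 (hom_deg Hh dy dn)) => {}Hphi.
  have Hphi' : hom_on E M (fun e => exists y, mdom N y /\ j y = e) (fun e => h (jinv j e)).
    apply: Hphi => r y dy; rewrite (hom_act Hh) //=; apply: fsh_ae => //.
      exact: (hom_dom Hh).
    by rewrite sectK.
  case: (HTM' _ _ (proj1 HTE) (jimg_SG HTN HQ) (jq HQ) _ Hphi') => [[g [Hg ag]] _].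
  exists g; split => // x dx; rewrite ag; [by rewrite (jinvK Hs HTN HQ) | by exists x].
move=> g1 g2 H1 H2 a; apply: (uniq_ext HTM (proj1 HTE) (jimg_SG HTN HQ) (jq HQ) H1 H2).
by move=> _ [y [dy <-]]; apply: a.
Qed.

Lemma part3 (N N' : modT S) (E E' : modT R) (j : mcar N -> mcar E) (j' : mcar N' -> mcar E') :
  compatible G f -> schematic G ->
  T_closed img N -> T_closed img N' ->
  is_Q G (fstar f N) E j -> is_Q G (fstar f N') E' j' ->
     (forall h : mcar N -> mcar N', ghom N N' h ->
        exists g : mcar E -> mcar E', ghom E E' g /\ forall x, mdom N x -> g (j x) = j' (h x)) /\
     (forall g1 g2 : mcar E -> mcar E', ghom E E' g1 -> ghom E E' g2 ->
        (forall x, mdom N x -> g1 (j x) = g2 (j x)) ->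
        forall e, mdom E e -> g1 e = g2 e) /\
     (forall g : mcar E -> mcar E', ghom E E' g ->
        exists h : mcar N -> mcar N', ghom N N' h /\ forall x, mdom N x -> g (j x) = j' (h x)) /\
     (forall h1 h2 : mcar N -> mcar N', ghom N N' h1 -> ghom N N' h2 ->
        (forall x, mdom N x -> j' (h1 x) = j' (h2 x)) ->
        forall x, mdom N x -> h1 x = h2 x).
Proof.
move=> Hc Hs HTN HTN' HQ HQ'.
have HMN := QN_mod HTN; have GDN := QN_gd HTN.
have HMN' := QN_mod HTN'; have GDN' := QN_gd HTN'.
have HTE := QE_T HQ; have HTE' := QE_T HQ'.
have HME' := QE_mod HQ'; have GDE' := QE_gd HQ'.
have Hj := Qj HQ; have Hj' := Qj HQ'.
split.
  move=> h Hh.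
  have Hphi := @hom_on_j N E j Hs HTN HQ E' (fun y => j' (h y)).
  have Hphi' : hom_on E E' (fun e => exists y, mdom N y /\ j y = e) (fun e => j' (h (jinv j e))).
    apply: Hphi.
    - by move=> y dy; apply: (hom_dom Hj'); apply: (hom_dom Hh).
    - move=> y1 y2 d1 d2; rewrite (homD Hh) // (homD Hj') //; exact: (hom_dom Hh).
    - move=> r y dy; rewrite (hom_act Hh) //; exact: (hom_act Hj' r (hom_dom Hh dy)).
    - by move=> n y dy dn; apply: (hom_deg Hj'); [apply: (hom_dom Hh) | apply: (hom_deg Hh)].
  case: (proj2 HTE' _ _ (proj1 HTE) (jimg_SG HTN HQ) (jq HQ) _ Hphi') => [[g [Hg ag]] _].
  exists g; split => // x dx; rewrite ag; [by rewrite /= (jinvK Hs HTN HQ) | by exists x].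
split.
  move=> g1 g2 H1 H2 a; apply: (uniq_ext HTE' (proj1 HTE) (jimg_SG HTN HQ) (jq HQ) H1 H2).
  by move=> _ [y [dy <-]]; apply: a.
split; last first.
  move=> h1 h2 H1 H2 a x dx.
  exact: (j_inj Hs HTN' HQ' (hom_dom H1 dx) (hom_dom H2 dx) (a x dx)).
move=> g Hg; have gj := ghom_comp Hj Hg.
set P := fun e => exists y, mdom N y /\ g (j y) = e.
have HP : SG_submod E' P := img_SG (fstar_mod HMN) GDN HME' gj.
have Pd : forall p, P p -> mdom E' p by case: HP => [[]].
have P0' : P 0 by case: HP => [[_ []]].
have PB' : forall x y, P x -> P y -> P (x - y) by case: HP => [[_ [_ []]]].
have Pact : forall r x, P x -> P (mact E' r x) by case: HP => [[_ [_ [_ H]]]].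
have Pann : forall r e, J r -> P e -> mact E' r e = 0.
  move=> r _ Jr [y [dy <-]]; rewrite -(hom_act gj) //= (proj2 (Hker r) Jr) (act_0 HMN dy).
  exact: (hom0 gj (dom0 HMN)).
have ae : forall p a b, P p -> f a = f b -> mact E' a p = mact E' b p.
  by move=> p a b Pp e; apply: (ann_eq HME' (Pd p Pp)) => // r Jr; apply: Pann.
have HL'' : LSG_mod img (desc (subT E' P)).
  apply: desc_LSG => //; try (by apply: sub_LSG => //; case: HTE').
  all: try (by move=> r x Jr Px; apply: Pann).
set Im' := fun e => exists y, mdom N' y /\ j' y = e.
have HIm' : SG_submod E' Im' := jimg_SG HTN' HQ'.
set N0 := fun p => P p /\ Im' p.
have jK := jinvK Hs HTN' HQ'.
have HN0 : SG_submod (desc (subT E' P)) N0.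
  split.
    split; first by move=> x [].
    split; first by split => //; exists 0; split; [exact: (dom0 HMN') | exact: (hom0 Hj' (dom0 HMN'))].
    split.
      move=> x y [px [y1 [d1 e1]]] [py [y2 [d2 e2]]]; subst x y; split; first by apply: PB'.
      by exists (y1 - y2); split; [exact: (domB HMN') | rewrite (homB Hj') //; move=> *; apply: (domB HMN')].
    move=> s x [px [y [dy e]]]; subst x; split; first by apply: Pact.
    exists (mact N' s y); split; first exact: (dom_act HMN').
    by rewrite /= -(hom_act Hj') //= sectK.
  move=> p [Pp Ip]; case: (comp_dec GDE' (Pd p Pp)) => s [us [ex _]].
  exists s, (fun k => comp (mdeg E') k p); split => //; split => // k.
  have ck1 : P (comp (mdeg E') k p) by apply: (SG_comp GDE' k (proj2 HP)).
  have ck2 : Im' (comp (mdeg E') k p).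
    apply: (SG_comp GDE' k (proj2 HIm')) => //.
    by case: HIm' => [[_ []]].
  by split; [split; [| exact: (compP GDE')] | split].
have Hq0 : quot_torsion img (desc (subT E' P)) N0.
  move=> p Pp; case: (jq HQ' (Pd p Pp)) => n [t h]; exists n, t => b hb.
  case: (ipow_lift hb) => a [ha fa].
  split; first by apply: Pact.
  by rewrite /= (ae p _ a) ?sectK //; apply: h.
have Hphi : hom_on (desc (subT E' P)) N' N0 (jinv j').
  split; first by move=> _ [_ [y [dy <-]]]; rewrite jK.
  split.
    move=> _ _ [_ [y1 [d1 <-]]] [_ [y2 [d2 <-]]]; have d12 := domD HMN' d1 d2.
    by rewrite -(homD Hj') // !jK.
  split.
    move=> s _ [_ [y [dy <-]]] /=; have ds := dom_act HMN' (f (sect f s)) dy.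
    by rewrite -(hom_act Hj') //= !jK //= sectK.
  move=> n _ [_ [y [dy <-]]] [_ dn]; rewrite jK //.
  exact: (j_refl Hs HTN' HQ').
case: (proj2 HTN' _ _ HL'' HN0 Hq0 _ Hphi) => [[psi [Hpsi apsi]] _].
have Ppj : forall y, mdom N y -> P (g (j y)) by move=> y dy; exists y.
have key : forall y, mdom N y -> j' (psi (g (j y))) = g (j y).
  move=> y dy; set p := g (j y); have Pp : P p by exact: Ppj.
  have dpsi : mdom N' (psi p) by exact: (hom_dom Hpsi Pp).
  have dj : mdom E' (j' (psi p)) by exact: (hom_dom Hj' dpsi).
  apply/eqP; rewrite eq_sym -subr_eq0; apply/eqP.
  apply: (TF_R Hs HTE'); split; first by apply: (domB HME') => //; exact: Pd.
  case: (jq HQ' (Pd p Pp)) => n [t h]; exists n, t => a ha.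
  have Na : N0 (mact E' a p) by split; [exact: Pact | exact: h].
  rewrite (actB HME') //; last exact: Pd.
  rewrite -(hom_act Hj' a dpsi) /=.
  have -> : mact N' (f a) (psi p) = psi (mact E' a p).
    rewrite -(hom_act Hpsi (f a) Pp) /=; congr psi; apply: ae => //; exact: sectK.
  rewrite apsi //; case: Na => _ [y' [dy' <-]]; by rewrite jK // subrr.
exists (fun y => psi (g (j y))); split; last by move=> x dx; rewrite key.
split; first by move=> y dy; apply: (hom_dom Hpsi); exact: Ppj.
split.
  move=> y1 y2 d1 d2 /=; have := homD gj d1 d2 => /= ->; exact: (homD Hpsi (Ppj _ d1) (Ppj _ d2)).
split.
  move=> s y dy /=; rewrite -{1}(sectK s).
  have := hom_act gj (sect f s) dy => /= ->.
  exact: (hom_act Hpsi s (Ppj _ dy)).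
move=> n y dy dn /=; apply: (hom_deg Hpsi (Ppj _ dy)); split; first exact: Ppj.
exact: (hom_deg gj).
Qed.
End Quot.

Theorem mainTheorem11 (R S : nzRingType) (G : int -> R -> Prop) (J : R -> Prop)
  (f : {rmorphism R -> S}) :
  schematic G -> SG_ideal G J ->
  (forall s, exists r, f r = s) -> (forall r, f r = 0 <-> J r) ->
  compatible G f ->
  (* i^! is well defined : C-R -> C-R/J *)
  (forall M : modT R, T_closed G M -> T_closed (img_grading f G) (fshriek f J M)) /\
  (* i_* is left adjoint to i^! : Hom(Q f_* N, M) ~ Hom(N, f^! M), g |-> g o j *)
  (forall (N : modT S) (E M : modT R) (j : mcar N -> mcar E),
     T_closed (img_grading f G) N -> is_Q G (fstar f N) E j -> T_closed G M ->
     (forall g : mcar E -> mcar M, ghom E M g -> ghom N (fshriek f J M) (g \o j)) /\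
     (forall h : mcar N -> mcar M, ghom N (fshriek f J M) h ->
        exists g : mcar E -> mcar M, ghom E M g /\ forall x, mdom N x -> g (j x) = h x) /\
     (forall g1 g2 : mcar E -> mcar M, ghom E M g1 -> ghom E M g2 ->
        (forall x, mdom N x -> g1 (j x) = g2 (j x)) ->
        forall e, mdom E e -> g1 e = g2 e)) /\
  (* i_* is fully faithful : h |-> Q f_*(h) is a bijection Hom(N,N') -> Hom(E,E') *)
  (forall (N N' : modT S) (E E' : modT R) (j : mcar N -> mcar E) (j' : mcar N' -> mcar E'),
     T_closed (img_grading f G) N -> T_closed (img_grading f G) N' ->
     is_Q G (fstar f N) E j -> is_Q G (fstar f N') E' j' ->
     (forall h : mcar N -> mcar N', ghom N N' h ->
        exists g : mcar E -> mcar E', ghom E E' g /\ forall x, mdom N x -> g (j x) = j' (h x)) /\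
     (forall g1 g2 : mcar E -> mcar E', ghom E E' g1 -> ghom E E' g2 ->
        (forall x, mdom N x -> g1 (j x) = g2 (j x)) ->
        forall e, mdom E e -> g1 e = g2 e) /\
     (forall g : mcar E -> mcar E', ghom E E' g ->
        exists h : mcar N -> mcar N', ghom N N' h /\ forall x, mdom N x -> g (j x) = j' (h x)) /\
     (forall h1 h2 : mcar N -> mcar N', ghom N N' h1 -> ghom N N' h2 ->
        (forall x, mdom N x -> j' (h1 x) = j' (h2 x)) ->
        forall x, mdom N x -> h1 x = h2 x)).
Proof.
move=> Hs HJ Hsurj Hker Hc.
case: (Hs) => [[[GR [_ G1]] _] _].
split; first by move=> M HM; exact: (part1 GR HJ Hsurj Hker Hc HM).
split; first by move=> N E M j HTN HQ HTM; exact: (part2 GR G1 HJ Hsurj Hker Hs HTN HQ HTM).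
by move=> N N' E E' j j' HTN HTN' HQ HQ'; exact: (part3 GR G1 HJ Hsurj Hker Hc Hs HTN HTN' HQ HQ').
Qed.
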